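(* Consider a connected regular graph with a proper two-coloring having $N_{\mathrm{G}}=N_{\mathrm{R}}=N/2$ green and red vertices, under the colored Moran process with fitness values $a_{\mathrm{G}}=r+\sigma$, $a_{\mathrm{R}}=r-\sigma$, $b_{\mathrm{G}}=1+\sigma$, $b_{\mathrm{R}}=1-\sigma$, where $r>0$, $r\neq1$, and $0\le\sigma<\min(1,r)$. Then the mean fixation probability of a single randomly placed $A$ is $$\rho_A=\frac{r(r-1)}{(r^2-\sigma^2)\left(1-\left(\frac{1-\sigma^2}{r^2-\sigma^2}\right)^{N/2}\right)}.$$ Consequently, on $0\le\sigma<\min(1,r)$, $\rho_A$ is an increasing function of $\sigma$ when $r>1$ and a decreasing function of $\sigma$ when $r<1$; and when $r=1$, $\rho_A=1/N$ for all $\sigma\in[0,1)$.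
   Context: A proper two-coloring assigns each vertex green or red so that adjacent vertices have different colors. Each vertex holds a type $A$ or type $B$ individual; $A$ has fitness $a_{\mathrm{G}}$ on green and $a_{\mathrm{R}}$ on red vertices, $B$ has $b_{\mathrm{G}}$ on green and $b_{\mathrm{R}}$ on red. Colored Moran process: each step an individual is chosen to reproduce with probability proportional to fitness and its offspring replaces a uniformly random neighbor. The mean fixation probability of $A$ is the probability that a single $A$, placed at a uniformly random vertex in an all-$B$ population, eventually takes over. *)

(* Defs.v *)
From HB Require Import structures.
From mathcomp Require Import all_boot all_order all_algebra.
From mathcomp Require Import all_classical all_reals all_analysis.
Set Implicit Arguments. Unset Strict Implicit. Unset Printing Implicit Defensive.
Import Order.TTheory GRing.Theory Num.Theory numFieldNormedType.Exports.
Local Open Scope ring_scope.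

Section ColoredMoran.
Variables (R : realType) (V : finType) (e : rel V) (green : pred V).
Variables (aG aR bG bR : R).

Definition deg (x : V) : nat := #|[set y | e x y]|.

(* state = set S of vertices occupied by type A; fitness of the individual at x *)
Definition fit (S : {set V}) (x : V) : R :=
  if x \in S then (if green x then aG else aR) else (if green x then bG else bR).

Definition total_fit (S : {set V}) : R := \sum_(z : V) fit S z.

(* x reproduces, its offspring replaces neighbour y *)
Definition moran_step (S : {set V}) (x y : V) : {set V} :=
  if x \in S then y |: S else S :\ y.

(* probability, starting from state S, that the process is in the all-A
   state setT after n steps (setT is absorbing, so this is the probability
   of A-fixation by time n) *)
Fixpoint absorb_prob (n : nat) : {set V} -> R :=
  match n with
  | 0 => fun S => (S == [set: V])%:R
  | n'.+1 => fun S =>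
      \sum_(x : V) \sum_(y | e x y)
        (fit S x / total_fit S) / (deg x)%:R * absorb_prob n' (moran_step S x y)
  end.

Definition mean_fix_seq (n : nat) : R :=
  (#|V|%:R)^-1 * \sum_(x : V) absorb_prob n [set x].

Definition mean_fixation : R := limn mean_fix_seq.

End ColoredMoran.

Definition rho_seq (R : realType) (V : finType) (e : rel V) (green : pred V)
  (r s : R) : nat -> R :=
  mean_fix_seq e green (r + s) (r - s) (1 + s) (1 - s).

Definition rho_A (R : realType) (V : finType) (e : rel V) (green : pred V)
  (r s : R) : R :=
  mean_fixation e green (r + s) (r - s) (1 + s) (1 - s).

(* Main.v *)
Require Import Defs.
From HB Require Import structures.
From mathcomp Require Import all_boot all_order all_algebra.
From mathcomp Require Import all_classical all_reals all_analysis.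
From mathcomp Require Import lra ring zify.
Import Order.TTheory GRing.Theory Num.Theory numFieldNormedType.Exports.
Local Open Scope ring_scope.
Local Notation fset0 := (@finset.set0 _).
Local Notation fsetT := (finset.setTfor _).
Section Edge.
Variables (V : finType) (e : rel V).
Hypothesis esymm : symmetric e.
Hypothesis econn : forall x y, connect e x y.

Lemma edge_out (S : {set V}) : S != fset0 -> S != fsetT ->
  exists x y, [/\ x \in S, y \notin S & e x y].
Proof.
move=> /set0Pn [x0 Hx0] /eqP HT.
have [y0 Hy0] : exists y0, y0 \notin S.
  case: (boolP [exists y, y \notin S]) => [/existsP[y Hy]|H]; first by exists y.
  exfalso; apply: HT; apply/setP => z; rewrite inE.
  by apply: contraNT H => Hz; apply/existsP; exists z.
case: (boolP [exists x, exists y, [&& x \in S, y \notin S & e x y]]).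
  by move=> /existsP[x /existsP[y /and3P[? ? ?]]]; exists x, y.
move=> H; exfalso.
have cl : fingraph.closed e [pred x | x \in S].
  move=> u v euv; rewrite !inE; apply/idP/idP => hu.
    apply: contraNT H => hv; apply/existsP; exists u; apply/existsP; exists v.
    by rewrite hu hv euv.
  apply: contraNT H => hv; apply/existsP; exists v; apply/existsP; exists u.
  by rewrite hu hv esymm euv.
have := closed_connect cl (econn x0 y0); rewrite !inE Hx0.
by move=> h; move: Hy0; rewrite -h.
Qed.
End Edge.
Section Gen.
Variables (R : realType) (V : finType) (e : rel V) (green : pred V) (aG aR bG bR : R).
Hypothesis esymm : symmetric e.
Hypothesis econn : forall x y, connect e x y.
Variable (k : nat) (x0 : V).
Hypothesis kpos : (0 < k)%N.
Hypothesis hdeg : forall x, deg e x = k.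
Hypotheses (paG : 0 < aG) (paR : 0 < aR) (pbG : 0 < bG) (pbR : 0 < bR).

Local Notation fitS := (fit green aG aR bG bR).
Local Notation W := (total_fit green aG aR bG bR).
Local Notation ap := (absorb_prob e green aG aR bG bR).

Definition Top (f : {set V} -> R) (S : {set V}) : R :=
  \sum_(x : V) \sum_(y | e x y) (fitS S x / W S) / (deg e x)%:R * f (moran_step S x y).

Lemma apS n S : ap n.+1 S = Top (ap n) S. Proof. by []. Qed.

Lemma fit_gt0 S x : 0 < fitS S x.
Proof. by rewrite /fit; case: (x \in S); case: (green x). Qed.

Lemma W_gt0 S : 0 < W S.
Proof.
rewrite /total_fit (bigD1 x0) //=.
have := fit_gt0 S x0.
have : 0 <= \sum_(i | i != x0) fitS S i by apply: sumr_ge0 => i _; exact: ltW (fit_gt0 _ _).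
lra.
Qed.

Lemma w_ge0 S x : 0 <= (fitS S x / W S) / (deg e x)%:R.
Proof.
by apply: divr_ge0; [apply: divr_ge0; apply: ltW; [exact: fit_gt0|exact: W_gt0]|].
Qed.

Lemma sum_deg x (c : R) : \sum_(y | e x y) c = c * (deg e x)%:R.
Proof.
rewrite sumr_const /deg cardsE mulr_natr.
by congr (_ *+ _); apply: eq_card => y.
Qed.

Lemma wsum S : \sum_x \sum_(y | e x y) (fitS S x / W S) / (deg e x)%:R = 1.
Proof.
under eq_bigr => x _ do rewrite sum_deg hdeg divfK ?pnatr_eq0 -?lt0n //.
by rewrite -mulr_suml divff // gt_eqF // W_gt0.
Qed.

Lemma Top_abs g S : (forall x y, moran_step S x y = S) -> Top g S = g S.
Proof.
move=> H; rewrite /Top.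
under eq_bigr => x _ do under eq_bigr => y _ do rewrite H.
under eq_bigr => x _ do rewrite -mulr_suml.
by rewrite -mulr_suml wsum mul1r.
Qed.

Lemma Top_le f g S : (forall S, f S <= g S) -> Top f S <= Top g S.
Proof.
move=> H; apply: ler_sum => x _; apply: ler_sum => y _.
by apply: ler_wpM2l; [exact: w_ge0|exact: H].
Qed.

Lemma Top_ge0 f S : (forall S, 0 <= f S) -> 0 <= Top f S.
Proof.
move=> H; apply: sumr_ge0 => x _; apply: sumr_ge0 => y _.
by apply: mulr_ge0; [exact: w_ge0|exact: H].
Qed.


Lemma Top1 S : Top (fun _ => 1) S = 1.
Proof. by rewrite /Top; under eq_bigr => x _ do under eq_bigr => y _ do rewrite mulr1; exact: wsum. Qed.

Lemma TopB f g S : Top (fun S => f S - g S) S = Top f S - Top g S.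
Proof.
rewrite /Top -sumrB; apply: eq_bigr => x _; rewrite -sumrB; apply: eq_bigr => y _.
by rewrite mulrBr.
Qed.

Lemma step_T (x y : V) : moran_step fsetT x y = fsetT.
Proof. by rewrite /moran_step finset.in_setT; apply/setP => z; rewrite !inE orbT. Qed.

Lemma step_0 (x y : V) : moran_step fset0 x y = fset0.
Proof. by rewrite /moran_step finset.in_set0; apply/setP => z; rewrite !inE andbF. Qed.

Lemma apT n : ap n (finset.setTfor V) = 1.
Proof. elim: n => [|n IH] /=; first by rewrite eqxx. by rewrite -/(Top _ _) Top_abs // => x y; rewrite step_T. Qed.

Lemma ap0 n : ap n (@finset.set0 V) = 0.
Proof.
elim: n => [|n IH] /=.
  case: eqP => // /setP /(_ x0); by rewrite !inE.
by rewrite -/(Top _ _) Top_abs // => x y; rewrite step_0.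
Qed.

Lemma ap_ge0 n S : 0 <= ap n S.
Proof. elim: n S => [|n IH] S /=; first by case: (_ == _). by rewrite -/(Top _ _); apply: Top_ge0. Qed.

Lemma ap_le1 n S : ap n S <= 1.
Proof. elim: n S => [|n IH] S /=; first by case: (_ == _). by rewrite -/(Top _ _) -(Top1 S); apply: Top_le. Qed.

Lemma ap_mono n S : ap n S <= ap n.+1 S.
Proof.
elim: n S => [|n IH] S.
  rewrite [ap 0 S]/=; case: eqP => [->|_]; first by rewrite apT.
  exact: ap_ge0.
by rewrite apS [ap n.+2 S]apS; apply: Top_le.
Qed.
Lemma antisym_sum (a : V -> V -> R) : (forall x y, a x y + a y x = 0) ->
  \sum_x \sum_y a x y = 0.
Proof.
move=> H.
have h1 : \sum_x \sum_y a x y = \sum_x \sum_y a y x := exchange_big _ _ _ _ _ _.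
have h2 : \sum_x \sum_y a x y + \sum_x \sum_y a y x = 0.
  rewrite -big_split /=; apply: big1 => x _; rewrite -big_split /=.
  by apply: big1 => y _; exact: H.
move: h2; rewrite -h1; lra.
Qed.

Definition fA (x : V) := if green x then aG else aR.
Definition fB (x : V) := if green x then bG else bR.

Lemma Top_harm (f : {set V} -> R) :
  (forall (S : {set V}) x y, x \in S -> y \notin S -> e x y ->
     fA x * (f (y |: S) - f S) + fB y * (f (S :\ x) - f S) = 0) ->
  forall S, Top f S = f S.
Proof.
move=> H S.
set C := (W S)^-1 / k%:R.
have E : Top f S - f S =
    C * \sum_x \sum_y (if e x y then fitS S x * (f (moran_step S x y) - f S) else 0).
  have fS : f S = \sum_x \sum_(y | e x y) (fitS S x / W S) / (deg e x)%:R * f S.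
    by under eq_bigr => x _ do rewrite -mulr_suml; rewrite -mulr_suml wsum mul1r.
  rewrite [X in _ - X = _]fS /Top -sumrB mulr_sumr.
  apply: eq_bigr => x _; rewrite -sumrB mulr_sumr big_mkcond /=.
  apply: eq_bigr => y _; case: ifP => _; last by rewrite mulr0.
  by rewrite hdeg /C; ring.
apply/eqP; rewrite -subr_eq0 E antisym_sum ?mulr0 // => x y.
rewrite (esymm y x); case exy: (e x y); last by rewrite addr0.
rewrite /moran_step /fit.
case xS: (x \in S); case yS: (y \in S).
- have -> : y |: S = S by apply/setP => z; rewrite !inE; case: eqP => // ->.
  have -> : x |: S = S by apply/setP => z; rewrite !inE; case: eqP => // ->.
  by rewrite !subrr !mulr0 addr0.
- by have := H S x y xS (negbT yS) exy; rewrite /fA /fB.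
- by have := H S y x yS (negbT xS) (ltac:(by rewrite esymm)); rewrite /fA /fB addrC.
- have -> : S :\ y = S by apply/setP => z; rewrite !inE; case: eqP => // ->; rewrite yS.
  have -> : S :\ x = S by apply/setP => z; rewrite !inE; case: eqP => // ->; rewrite xS.
  by rewrite !subrr !mulr0 addr0.
Qed.
Lemma maxprinc (f : {set V} -> R) : (forall S, Top f S = f S) ->
  f fset0 = 0 -> f fsetT = 0 -> forall S, f S <= 0.
Proof.
move=> Hh H0 HT S.
have [S0 HS0] : exists S0, forall S, f S <= f S0.
  case: (@arg_maxP _ _ _ fset0 predT f isT) => S0 _ HS; exists S0 => S'; exact: HS.
case: (@arg_maxnP _ S0 (fun S => f S == f S0) (fun S : {set V} => #|S|) (eqxx _)).
move=> S1 /eqP HS1 Hmax.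
suff: f S0 <= 0 by apply: le_trans.
case: (eqVneq S1 fset0) => [E|N0]; first by rewrite -HS1 E H0.
case: (eqVneq S1 fsetT) => [E|NT]; first by rewrite -HS1 E HT.
have [x [y [xS yS exy]]] := @edge_out _ _ esymm econn _ N0 NT.
have lt : f (y |: S1) < f S0.
  rewrite lt_neqAle HS0 andbT; apply/negP => /Hmax; rewrite cardsU1 yS.
  by rewrite /= add1n ltnn.
exfalso.
have E : f S0 - Top f S1 = \sum_x \sum_(y | e x y)
    (fitS S1 x / W S1) / (deg e x)%:R * (f S0 - f (moran_step S1 x y)).
  have fS : f S0 = \sum_x \sum_(y | e x y) (fitS S1 x / W S1) / (deg e x)%:R * f S0.
    by under eq_bigr => x' _ do rewrite -mulr_suml; rewrite -mulr_suml wsum mul1r.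
  rewrite [X in X - _ = _]fS /Top -sumrB; apply: eq_bigr => x' _.
  by rewrite -sumrB; apply: eq_bigr => y' _; rewrite mulrBr.
have pos : 0 < (fitS S1 x / W S1) / (deg e x)%:R * (f S0 - f (y |: S1)).
  apply: mulr_gt0; last by rewrite subr_gt0.
  apply: divr_gt0; first by apply: divr_gt0; [exact: fit_gt0|exact: W_gt0].
  by rewrite hdeg ltr0n.
have ge : forall x' y', 0 <= (fitS S1 x' / W S1) / (deg e x')%:R * (f S0 - f (moran_step S1 x' y')).
  by move=> x' y'; apply: mulr_ge0; [exact: w_ge0|rewrite subr_ge0].
have le1 : (fitS S1 x / W S1) / (deg e x)%:R * (f S0 - f (y |: S1)) <=
    \sum_(y' | e x y') (fitS S1 x / W S1) / (deg e x)%:R * (f S0 - f (moran_step S1 x y')).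
  have mst : moran_step S1 x y = y |: S1 by rewrite /moran_step xS.
  rewrite (bigD1 y) //= mst lerDl.
  by apply: sumr_ge0 => y' _; exact: ge.
have le2 : \sum_(y' | e x y') (fitS S1 x / W S1) / (deg e x)%:R * (f S0 - f (moran_step S1 x y'))
   <= \sum_x \sum_(y | e x y) (fitS S1 x / W S1) / (deg e x)%:R * (f S0 - f (moran_step S1 x y)).
  rewrite [X in _ <= X](bigD1 x) //= lerDl.
  by apply: sumr_ge0 => x' _; apply: sumr_ge0 => y' _; exact: ge.
have := Hh S1; rewrite HS1 => HT1.
move: E pos le1 le2; rewrite HT1; lra.
Qed.

Local Open Scope classical_set_scope.
Lemma ap_cvg_lim S : (fun n => ap n S) @ \oo --> limn (fun n => ap n S).
Proof.
apply: nondecreasing_is_cvgn.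
  exact: (homo_leq (fun x => le_refl x) (fun y x z => @le_trans _ _ y x z) (fun n => ap_mono n S)).
by exists 1 => _ [n _ <-]; exact: ap_le1.
Qed.

Definition L S := limn (fun n => ap n S).

Lemma L_harm S : Top L S = L S.
Proof.
have h1 : (fun n => ap n.+1 S) @ \oo --> L S.
  by have := ap_cvg_lim S; rewrite -cvg_shiftS.
have h2 : (fun n => ap n.+1 S) @ \oo --> Top L S.
  apply: (@cvg_big R V +%R 0 predT add_continuous) => // x _.
  apply: (@cvg_big R V +%R 0 _ add_continuous) => // y _.
  by apply: cvgMl_tmp; exact: ap_cvg_lim.
by rewrite -(cvg_lim (@Rhausdorff R) h1) (cvg_lim (@Rhausdorff R) h2).
Qed.

Lemma L0 : L fset0 = 0.
Proof.
rewrite /L (_ : (fun n => ap n fset0) = fun _ => 0); last by apply: funext => n; exact: ap0.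
exact: lim_cst.
Qed.

Lemma LT : L fsetT = 1.
Proof.
rewrite /L (_ : (fun n => ap n fsetT) = fun _ => 1); last by apply: funext => n; exact: apT.
exact: lim_cst.
Qed.

Lemma ap_cvg (h : {set V} -> R) : (forall S, Top h S = h S) ->
  h fset0 = 0 -> h fsetT = 1 -> forall S, (fun n => ap n S) @ \oo --> h S.
Proof.
move=> Hh h0 hT S.
suff <- : L S = h S by exact: ap_cvg_lim.
have d1 : L S - h S <= 0.
  apply: (@maxprinc (fun S => L S - h S)) => [S'||].
  - by rewrite TopB L_harm Hh.
  - by rewrite L0 h0 subrr.
  - by rewrite LT hT subrr.
have d2 : h S - L S <= 0.
  apply: (@maxprinc (fun S => h S - L S)) => [S'||].
  - by rewrite TopB L_harm Hh.
  - by rewrite L0 h0 subrr.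
  - by rewrite LT hT subrr.
lra.
Qed.
Section HarmFns.
Variable c : V -> R.
Definition mprod (S : {set V}) := \prod_(z in S) c z.
Definition hmul S := (1 - mprod S) / (1 - mprod fsetT).

Lemma hmul_harm : (forall x y, e x y -> fA x * c x * (1 - c y) + fB y * (c x - 1) = 0) ->
  forall S, Top hmul S = hmul S.
Proof.
move=> Hc; apply: Top_harm => S x y xS yS exy.
rewrite /hmul /mprod (big_setU1 _ yS) /= (big_setD1 _ xS) /=.
set D := 1 - \prod_(z in fsetT) c z; set m' := \prod_(i in S :\ x) c i.
apply: (@eq_trans _ _ (m' / D * (fA x * c x * (1 - c y) + fB y * (c x - 1)))).
  by ring.
by rewrite Hc // mulr0.
Qed.

Lemma hmul0 : hmul fset0 = 0.
Proof. by rewrite /hmul /mprod big_set0 subrr mul0r. Qed.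

Lemma hmulT : 1 - mprod fsetT != 0 -> hmul fsetT = 1.
Proof. by move=> H; rewrite /hmul divff. Qed.

Definition hadd (S : {set V}) := (\sum_(z in S) c z) / (\sum_z c z).

Lemma hadd_harm : (forall x y, e x y -> fA x * c y - fB y * c x = 0) ->
  forall S, Top hadd S = hadd S.
Proof.
move=> Hc; apply: Top_harm => S x y xS yS exy.
rewrite /hadd (big_setU1 _ yS) /= (big_setD1 _ xS) /=.
set m' := \sum_(i in S :\ x) c i; set D := \sum_z c z.
apply: (@eq_trans _ _ (D^-1 * (fA x * c y - fB y * c x))).
  by ring.
by rewrite Hc // mulr0.
Qed.

Lemma hadd0 : hadd fset0 = 0.
Proof. by rewrite /hadd big_set0 mul0r. Qed.

Lemma haddT : \sum_z c z != 0 -> hadd fsetT = 1.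
Proof.
move=> H; rewrite /hadd.
under eq_bigl do rewrite finset.in_setT.
by rewrite divff.
Qed.
End HarmFns.
End Gen.
Local Open Scope classical_set_scope.

Lemma rho_cvg (R : realType) (V : finType) (e : rel V) (green : pred V)
  (aG aR bG bR : R) (k : nat) (x0 : V) :
  symmetric e -> (forall x y, connect e x y) -> (0 < k)%N ->
  (forall x, deg e x = k) -> 0 < aG -> 0 < aR -> 0 < bG -> 0 < bR ->
  forall h : {set V} -> R, (forall S, Top R V e green aG aR bG bR h S = h S) ->
  h fset0 = 0 -> h fsetT = 1 ->
  mean_fix_seq e green aG aR bG bR @ \oo --> (#|V|%:R)^-1 * \sum_x h [set x]%SET.
Proof.
move=> esymm econn kpos hdeg paG paR pbG pbR h Hh h0 hT.
apply: cvgMl_tmp; apply: (@cvg_big R V +%R 0 predT add_continuous) => // x _.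
exact: (@ap_cvg R V e green aG aR bG bR esymm econn k x0 kpos hdeg paG paR pbG pbR h Hh h0 hT).
Qed.
Theorem mainTheorem4 (R : realType) (V : finType) (e : rel V) (green : pred V)
  (r : R) :
  symmetric e -> irreflexive e ->
  (0 < #|V|)%N ->
  (forall x y, connect e x y) ->
  (exists k : nat, forall x, deg e x = k) ->
  (forall x y, e x y -> green x != green y) ->
  #|[pred x | green x]| = #|[pred x | ~~ green x]| ->
  0 < r ->
  [/\ r != 1 -> forall s : R, 0 <= s -> s < Num.min 1 r ->
        rho_seq e green r s @ \oo -->
          (r * (r - 1) / ((r ^+ 2 - s ^+ 2) *
             (1 - ((1 - s ^+ 2) / (r ^+ 2 - s ^+ 2)) ^+ (#|V| %/ 2)%N)) : R),
      1 < r -> forall s1 s2 : R, 0 <= s1 -> s1 <= s2 -> s2 < Num.min 1 r ->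
        rho_A e green r s1 <= rho_A e green r s2,
      r < 1 -> forall s1 s2 : R, 0 <= s1 -> s1 <= s2 -> s2 < Num.min 1 r ->
        rho_A e green r s2 <= rho_A e green r s1
    & r = 1 -> forall s : R, 0 <= s -> s < 1 ->
        rho_seq e green r s @ \oo --> ((#|V|%:R)^-1 : R)].
Proof.
move=> esymm eirr hV econn [k hdeg] hcol hcard r0.
have /card_gt0P [x0 _] := hV.
set g := #|[pred x | green x]|.
have hN : #|V| = (g + g)%N.
  rewrite -(cardC [pred x | green x]); congr addn; rewrite /g hcard.
  by apply: eq_card => z; rewrite !inE.
have hdiv : (#|V| %/ 2)%N = g by rewrite hN; lia.
have gpos : (0 < g)%N by move: hV; rewrite hN; lia.
have [xg xgG] : exists xg, green xg.
  by have /card_gt0P [xg] := gpos; rewrite inE => ?; exists xg.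
have [xr xrR] : exists xr, ~~ green xr.
  by move: gpos; rewrite /g hcard => /card_gt0P [xr]; rewrite inE => ?; exists xr.
have kpos : (0 < k)%N.
  have N0 : [set xg]%SET != fset0 by apply/set0Pn; exists xg; rewrite inE.
  have NT : [set xg]%SET != fsetT.
    apply/eqP => /setP /(_ xr); rewrite !inE => /eqP E.
    by move: xrR; rewrite E xgG.
  have [x [y [_ _ exy]]] := @edge_out _ _ esymm econn _ N0 NT.
  by rewrite -(hdeg x) /deg; apply/card_gt0P; exists y; rewrite inE.
pose q (s : R) := (1 - s ^+ 2) / (r ^+ 2 - s ^+ 2).
pose F (s : R) := r * (r - 1) / ((r ^+ 2 - s ^+ 2) * (1 - q s ^+ g)).
have part1 : r != 1 -> forall s : R, 0 <= s -> s < Num.min 1 r ->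
    rho_seq e green r s @ \oo --> F s.
  move=> r1 s s0; rewrite lt_min => /andP[s1 sr].
  have pa : 0 < r + s by lra.
  have pb : 0 < r - s by lra.
  have pc : 0 < 1 + s by lra.
  have pd : 0 < 1 - s by lra.
  have nz1 : r - s != 0 by rewrite lt0r_neq0.
  have nz2 : r + s != 0 by rewrite lt0r_neq0.
  have rs2 : 0 < r ^+ 2 - s ^+ 2 by nra.
  have nz3 : r ^+ 2 - s ^+ 2 != 0 by rewrite lt0r_neq0.
  pose c (z : V) := if green z then (1 - s) / (r - s) else (1 + s) / (r + s).
  have Hc : forall x y, e x y -> fA R V green (r + s) (r - s) x * c x * (1 - c y)
      + fB R V green (1 + s) (1 - s) y * (c x - 1) = 0.
    move=> x y exy; have := hcol x y exy; rewrite /fA /fB /c.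
    by case: (green x); case: (green y) => // _; field; rewrite ?nz1 ?nz2.
  have mT : mprod R V c fsetT = q s ^+ g.
    rewrite /mprod; under eq_bigl do rewrite finset.in_setT.
    rewrite (bigID green) /=.
    rewrite (eq_bigr (fun=> (1 - s) / (r - s))); last by move=> i; rewrite /c => ->.
    rewrite [X in _ * X](eq_bigr (fun=> (1 + s) / (r + s))); last by move=> i; rewrite /c => /negbTE ->.
    rewrite !prodr_const -/g -hcard -exprMn /q; congr (_ ^+ _).
    by field; rewrite ?nz1 ?nz2 ?nz3.
  have q0 : 0 <= q s by apply: divr_ge0; nra.
  have q1 : q s ^+ g != 1.
    rewrite pexpr_eq1 //; apply/negP => /eqP hq.
    move: hq; rewrite /q => hq.
    have h1 : 1 - s ^+ 2 = r ^+ 2 - s ^+ 2 by rewrite -(divfK nz3 (1 - s ^+ 2)) hq mul1r.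
    have h2 : (r - 1) * (r + 1) = 0.
      have -> : (r - 1) * (r + 1) = r ^+ 2 - 1 by ring.
      lra.
    move/eqP: h2; rewrite mulf_eq0 => /orP[]; first by rewrite subr_eq0 (negbTE r1).
    move/eqP; lra.
  have Hh := @hmul_harm R V e green (r + s) (r - s) (1 + s) (1 - s) esymm k x0 kpos hdeg
    pa pb pc pd c Hc.
  have hT : hmul R V c fsetT = 1 by rewrite hmulT // mT subr_eq0 eq_sym.
  have := @rho_cvg R V e green (r + s) (r - s) (1 + s) (1 - s) k x0 esymm econn kpos hdeg
    pa pb pc pd _ Hh (hmul0 _ _ _) hT.
  suff -> : (#|V|%:R)^-1 * \sum_x hmul R V c [set x]%SET = F s by [].
  under eq_bigr => x _ do rewrite /hmul mT /mprod big_set1.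
  rewrite -mulr_suml.
  have Sc : \sum_x (1 - c x) = g%:R * (1 - (1 - s) / (r - s)) + g%:R * (1 - (1 + s) / (r + s)).
    rewrite (bigID green) /=.
    rewrite (eq_bigr (fun=> 1 - (1 - s) / (r - s))); last by move=> i; rewrite /c => ->.
    rewrite [X in _ + X](eq_bigr (fun=> 1 - (1 + s) / (r + s))); last by move=> i; rewrite /c => /negbTE ->.
    rewrite !sumr_const !mulr_natl; congr (_ *+ _ + _ *+ _); rewrite /g ?hcard; exact: eq_card.
  rewrite Sc /F hN natrD.
  have t1 : 1 - q s ^+ g != 0 by rewrite subr_eq0 eq_sym.
  have g0 : 0 < (g%:R : R) by rewrite ltr0n.
  move: t1; set t := q s ^+ g => t1.
  move: g0; set G := (g%:R : R) => g0; clearbody G t.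
  have GG : G + G != 0 by rewrite lt0r_neq0 //; lra.
  by field; rewrite t1 nz1 nz2 nz3 GG.
have qge0 : forall s, 0 <= s -> s < Num.min 1 r -> 0 <= q s.
  move=> s s0; rewrite lt_min => /andP[s1 sr]; apply: divr_ge0; nra.
have Sge1 : forall s, 0 <= q s -> 1 <= \sum_(i < g) q s ^+ i.
  move=> s qs; rewrite (bigD1 (Ordinal gpos)) //= expr0 lerDl.
  by apply: sumr_ge0 => i _; exact: exprn_ge0.
have FE : r != 1 -> forall s, 0 <= s -> s < Num.min 1 r ->
    F s = r / ((r + 1) * \sum_(i < g) q s ^+ i).
  move=> r1 s s0 smin; have := smin; rewrite lt_min => /andP[s1 sr].
  have rs2 : 0 < r ^+ 2 - s ^+ 2 by nra.
  have nz3 : r ^+ 2 - s ^+ 2 != 0 by rewrite lt0r_neq0.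
  have rm1 : r - 1 != 0 by rewrite subr_eq0.
  have rp1 : r + 1 != 0 by rewrite lt0r_neq0 //; lra.
  have r21 : r ^+ 2 - 1 != 0.
    have -> : r ^+ 2 - 1 = (r - 1) * (r + 1) by ring.
    by rewrite mulf_neq0.
  have Hsum := subrX1 (q s) g.
  have E2 : (r ^+ 2 - s ^+ 2) * (q s - 1) = 1 - r ^+ 2 by rewrite /q; field.
  have E3 : (r ^+ 2 - s ^+ 2) * (1 - q s ^+ g) = (r ^+ 2 - 1) * \sum_(i < g) q s ^+ i.
    have -> : (r ^+ 2 - s ^+ 2) * (1 - q s ^+ g) = - ((r ^+ 2 - s ^+ 2) * (q s ^+ g - 1)) by ring.
    rewrite Hsum mulrA E2; ring.
  rewrite /F E3.
  have X1 := Sge1 s (qge0 s s0 smin).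
  move: X1; set X := \sum_(i < g) _ => X1.
  have X0 : X != 0 by rewrite lt0r_neq0 //; lra.
  clearbody X.
  by field; rewrite X0 rp1 r21.
have Fmon : forall X1 X2 : R, 1 <= X2 -> X2 <= X1 -> r / ((r + 1) * X1) <= r / ((r + 1) * X2).
  move=> X1 X2 h1 h2; apply: ler_wpM2l; first lra.
  rewrite lef_pV2 ?posrE; first by rewrite ler_pM2l //; lra.
  - by apply: mulr_gt0; lra.
  - by apply: mulr_gt0; lra.
have Smon : forall a b : R, 0 <= a -> a <= b -> \sum_(i < g) a ^+ i <= \sum_(i < g) b ^+ i.
  move=> a b a0 ab; apply: ler_sum => i _; apply: lerXn2r; rewrite ?nnegrE //.
  exact: le_trans ab.
have qdiff : forall s1 s2, 0 <= s1 -> s1 <= s2 -> s2 < Num.min 1 r ->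
    q s1 - q s2 = (r ^+ 2 - 1) * (s2 ^+ 2 - s1 ^+ 2) / ((r ^+ 2 - s1 ^+ 2) * (r ^+ 2 - s2 ^+ 2)).
  move=> s1 s2 h1 h12; rewrite lt_min => /andP[_ h2].
  have n1 : r ^+ 2 - s1 ^+ 2 != 0 by rewrite lt0r_neq0 //; nra.
  have n2 : r ^+ 2 - s2 ^+ 2 != 0 by rewrite lt0r_neq0 //; nra.
  by rewrite /q; field; rewrite n1 n2.
have rhoE : forall s, r != 1 -> 0 <= s -> s < Num.min 1 r -> rho_A e green r s = F s.
  move=> s r1 s0 sm; rewrite /rho_A /mean_fixation.
  exact: (cvg_lim (@Rhausdorff R) (part1 r1 s s0 sm)).
split.
- by move=> r1 s s0 sm; rewrite hdiv; exact: part1.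
- move=> r1 s1 s2 h1 h12 h2.
  have r1' : r != 1 by rewrite gt_eqF.
  have h1m : s1 < Num.min 1 r by exact: le_lt_trans h12 h2.
  have h2' : 0 <= s2 by exact: le_trans h12.
  rewrite !rhoE // !FE //; apply: Fmon; first exact: Sge1 (qge0 _ h2' h2).
  apply: Smon; first exact: qge0 h2' h2.
  rewrite -subr_ge0 qdiff //.
  move: h2; rewrite lt_min => /andP[_ h2].
  apply: divr_ge0; apply: mulr_ge0; nra.
- move=> r1 s1 s2 h1 h12 h2.
  have r1' : r != 1 by rewrite lt_eqF.
  have h1m : s1 < Num.min 1 r by exact: le_lt_trans h12 h2.
  have h2' : 0 <= s2 by exact: le_trans h12.
  rewrite !rhoE // !FE //; apply: Fmon; first exact: Sge1 (qge0 _ h1 h1m).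
  apply: Smon; first exact: qge0 h1 h1m.
  rewrite -subr_ge0.
  have -> : q s2 - q s1 = - (q s1 - q s2) by ring.
  rewrite qdiff //.
  move: h2; rewrite lt_min => /andP[_ h2].
  rewrite -!mulNr; apply: divr_ge0; first (apply: mulr_ge0; nra).
  apply: mulr_ge0; nra.
- move=> r1 s s0 s1; subst r.
  have pa : 0 < 1 + s by lra.
  have pb : 0 < 1 - s by lra.
  pose c (z : V) := if green z then 1 + s else 1 - s.
  have Hc : forall x y, e x y -> fA R V green (1 + s) (1 - s) x * c y
      - fB R V green (1 + s) (1 - s) y * c x = 0.
    by move=> x y _; rewrite /fA /fB /c mulrC subrr.
  have Hh := @hadd_harm R V e green (1 + s) (1 - s) (1 + s) (1 - s) esymm k x0 kpos hdeg
    pa pb pa pb c Hc.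
  have Sc0 : \sum_z c z != 0.
    rewrite lt0r_neq0 // (bigD1 x0) //=.
    have : 0 <= \sum_(i | i != x0) c i.
      by apply: sumr_ge0 => i _; rewrite /c; case: (green i); lra.
    have : 0 < c x0 by rewrite /c; case: (green x0).
    lra.
  have hT := @haddT R V c Sc0.
  have := @rho_cvg R V e green (1 + s) (1 - s) (1 + s) (1 - s) k x0 esymm econn kpos hdeg
    pa pb pa pb _ Hh (hadd0 _ _ _) hT.
  suff -> : \sum_x hadd R V c [set x]%SET = 1 by rewrite mulr1.
  under eq_bigr => x _ do rewrite /hadd big_set1.
  by rewrite -mulr_suml divff.
Qed.
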